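(* Let $\mathbf{x}=(\mathbf{x}_1,\dots,\mathbf{x}_n)$ be a Generalized Nash equilibrium of the game $G^{(2)}$ and suppose $i\in\mathcal{T}_I(\mathbf{x})$ for some $i\in[n]$. Then $J_{\mathbf{x}_{-i}}=A(\mathbf{x}_{-i})$.
   Context: $G^{(2)}$ is a Fragile multi-CPR Game: $n,m\ge1$, $[k]=\{1,\dots,k\}$, $C_m=\{(x_1,\dots,x_m)\in[0,1]^m:\sum_j x_j\le1\}$, $\mathcal{C}_n=\prod_{i\in[n]}C_m$, $\mathcal{C}_{-i}=\prod_{[n]\setminus\{i\}}C_m$. A profile is $\mathbf{x}=(\mathbf{x}_1,\dots,\mathbf{x}_n)$, $\mathbf{x}_i=(x_{i1},\dots,x_{im})$; write $\mathbf{x}=(\mathbf{x}_i,\mathbf{x}_{-i})$; $\mathbf{x}_T^{(j)}=\sum_i x_{ij}$, $\mathbf{x}_T^{j|i}=\sum_{\ell\ne i}x_{\ell j}$. Each CPR $j$ has return rate $\mathcal{R}_j(t)>1$ and failure probability $p_j(t)\in[0,1]$; each player $i$ has parameters $a_i,k_i$. $\mathcal{F}_{ij}(t)=(\mathcal{R}_j(t)-1)^{a_i}(1-p_j(t))-k_ip_j(t)$; utility $\mathcal{V}_i(\mathbf{x}_i;\mathbf{x}_{-i})=\sum_j x_{ij}^{a_i}\mathcal{F}_{ij}(\mathbf{x}_T^{(j)})$. Assumption: (1) $p_j(0)=0$, $p_j(t)=1$ for $t\ge1$; (2) $a_i\in(0,1]$, $k_i>0$; (3) each $\mathcal{F}_{ij}$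 (continuous on $[0,1]$) has strictly negative first and second derivatives on $(0,1)$. $\omega_{ij}\in(0,1)$ is the unique zero of $\mathcal{F}_{ij}$ in $(0,1)$. $A(\mathbf{x}_{-i})=\{j:\mathbf{x}_T^{j|i}<\omega_{ij}\}$. $\vartheta_i(\mathbf{x}_{-i})=C_m\cap\big(\prod_{j\in A(\mathbf{x}_{-i})}[0,\omega_{ij}-\mathbf{x}_T^{j|i}]\times\prod_{j\notin A(\mathbf{x}_{-i})}\{0\}\big)$. A Generalized Nash equilibrium is $\mathbf{x}\in\mathcal{C}_n$ with, for all $i$, $\mathbf{x}_i\in\vartheta_i(\mathbf{x}_{-i})$ and $\mathcal{V}_i(\mathbf{x}_i;\mathbf{x}_{-i})\ge\mathcal{V}_i(\mathbf{y};\mathbf{x}_{-i})$ for all $\mathbf{y}\in\vartheta_i(\mathbf{x}_{-i})$. $\psi_{ij}(x;s)=x\,\mathcal{F}_{ij}'(x+s)+a_i\mathcal{F}_{ij}(x+s)$. For a GNE $\mathbf{x}$: $J_{\mathbf{x}_{-i}}=\{j\in A(\mathbf{x}_{-i}):x_{ij}\ne0\}$; $\mathbf{x}_i$ is of Type I if $\sum_{j\in J_{\mathbf{x}_{-i}}}x_{ij}<1$ and $\psi_{ij}(x_{ij};\mathbf{x}_T^{j|i})=0$ for all $j\in J_{\mathbf{x}_{-i}}$; of Type II if $\sum_{j\in J_{\mathbf{x}_{-i}}}x_{ij}=1$ and there is $\kappa_0\ge0$ with $x_{ij}^{a_i-1}\psi_{ij}(x_{ij};\mathbf{x}_T^{j|i})=\kappa_0$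 for all $j\in J_{\mathbf{x}_{-i}}$. $\mathcal{T}_I(\mathbf{x})=\{i\in[n]:\mathbf{x}_i\text{ is of Type I}\}$. *)

(* Defs.v *)
From HB Require Import structures.
From mathcomp Require Import all_boot all_order all_algebra.
From mathcomp Require Import all_classical all_reals all_analysis.
Set Implicit Arguments. Unset Strict Implicit. Unset Printing Implicit Defensive.
Import Order.TTheory GRing.Theory Num.Theory.
Import numFieldNormedType.Exports.
Local Open Scope ring_scope.
Local Open Scope classical_set_scope.

Section Game.
Variables (R : realType) (n m : nat).

Definition Ffun (Rj pj : R -> R) (a k : R) (t : R) : R :=
  (Rj t - 1) `^ a * (1 - pj t) - k * pj t.

Definition inC (y : 'I_m -> R) : Prop :=
  (forall j, 0 <= y j <= 1) /\ \sum_(j < m) y j <= 1.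

Definition xminus (x : 'I_n -> 'I_m -> R) (i : 'I_n) (j : 'I_m) : R :=
  \sum_(l < n | l != i) x l j.

Definition inA (omega : 'I_n -> 'I_m -> R) (x : 'I_n -> 'I_m -> R)
  (i : 'I_n) (j : 'I_m) : bool := xminus x i j < omega i j.

Definition inTheta (omega : 'I_n -> 'I_m -> R) (x : 'I_n -> 'I_m -> R)
  (i : 'I_n) (y : 'I_m -> R) : Prop :=
  inC y /\ forall j, (inA omega x i j -> 0 <= y j <= omega i j - xminus x i j)
                  /\ (~~ inA omega x i j -> y j = 0).

(* V_i(y ; x_{-i}) ; note x_T^{(j)} of (y, x_{-i}) is y_j + x_T^{j|i} *)
Definition util (Rr pp : 'I_m -> R -> R) (a k : 'I_n -> R)
  (x : 'I_n -> 'I_m -> R) (i : 'I_n) (y : 'I_m -> R) : R :=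
  \sum_(j < m) (y j) `^ (a i) * Ffun (Rr j) (pp j) (a i) (k i) (y j + xminus x i j).

Definition isGNE (Rr pp : 'I_m -> R -> R) (a k : 'I_n -> R)
  (omega : 'I_n -> 'I_m -> R) (x : 'I_n -> 'I_m -> R) : Prop :=
  forall i, inC (x i) /\ inTheta omega x i (x i) /\
    forall y, inTheta omega x i y -> util Rr pp a k x i y <= util Rr pp a k x i (x i).

Definition psi (Rr pp : 'I_m -> R -> R) (a k : 'I_n -> R) (i : 'I_n) (j : 'I_m)
  (y s : R) : R :=
  y * derive1 (Ffun (Rr j) (pp j) (a i) (k i)) (y + s)
  + a i * Ffun (Rr j) (pp j) (a i) (k i) (y + s).

Definition inJ (omega : 'I_n -> 'I_m -> R) (x : 'I_n -> 'I_m -> R)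
  (i : 'I_n) (j : 'I_m) : bool := inA omega x i j && (x i j != 0).

Definition TypeI (Rr pp : 'I_m -> R -> R) (a k : 'I_n -> R)
  (omega : 'I_n -> 'I_m -> R) (x : 'I_n -> 'I_m -> R) (i : 'I_n) : Prop :=
  \sum_(j < m | inJ omega x i j) x i j < 1 /\
  forall j, inJ omega x i j -> psi Rr pp a k i j (x i j) (xminus x i j) = 0.

End Game.

(* Main.v *)
Require Import Defs.
From HB Require Import structures.
From mathcomp Require Import all_boot all_order all_algebra.
From mathcomp Require Import all_classical all_reals all_analysis.
From mathcomp Require Import lra.
Import Order.TTheory GRing.Theory Num.Theory.
Import numFieldNormedType.Exports.
Local Open Scope ring_scope.
Local Open Scope classical_set_scope.

Lemma Fpos (R : realType) (F : R -> R) (w t : R) :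
  {within `[0, 1], continuous F} -> 0 < F 0 -> 0 < w < 1 ->
  (forall c, 0 < c < 1 -> F c = 0 -> c = w) -> 0 <= t -> t < w -> 0 < F t.
Proof.
move=> cF F0 /andP[w0 w1] uq t0 tw.
have [->//|tn0] := eqVneq t 0.
rewrite ltNge; apply/negP => Ft.
have sub : `[0, t] `<=` `[0, 1].
  move=> z; rewrite /= !in_itv /= => /andP[z0 zt]; apply/andP; split => //.
  by rewrite (le_trans zt) // ltW // (lt_trans tw w1).
have := @IVT R F 0 t 0 t0 (continuous_subspaceW sub cF).
case => [|c].
  by rewrite ge_min Ft orbT le_max (ltW F0).
rewrite in_itv /= => /andP[c0 ct] Fc.
have [c0'|] := eqVneq c 0; first by move: Fc; rewrite c0' => F00; move: F0; rewrite F00 ltxx.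
move=> cn0.
have cw : c = w.
  apply: uq => //; rewrite lt_neqAle eq_sym cn0 c0 /=.
  by rewrite (le_lt_trans ct) // (lt_trans tw w1).
by move: tw; rewrite ltNge -cw ct.
Qed.
Theorem lemma5 (R : realType) (n m : nat) (Hn : (0 < n)%N) (Hm : (0 < m)%N)
  (Rr pp : 'I_m -> R -> R) (a k : 'I_n -> R) (omega : 'I_n -> 'I_m -> R)
  (HR : forall j t, 1 < Rr j t)
  (Hp0 : forall j, pp j 0 = 0)
  (Hp1 : forall j t, 1 <= t -> pp j t = 1)
  (Hp01 : forall j t, 0 <= pp j t <= 1)
  (Ha : forall i, 0 < a i <= 1)
  (Hk : forall i, 0 < k i)
  (HFc : forall i j, {within `[0, 1], continuous (Ffun (Rr j) (pp j) (a i) (k i))})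
  (HFd : forall i j t, 0 < t < 1 ->
     derivable (Ffun (Rr j) (pp j) (a i) (k i)) t 1 /\
     derive1 (Ffun (Rr j) (pp j) (a i) (k i)) t < 0 /\
     derivable (derive1 (Ffun (Rr j) (pp j) (a i) (k i))) t 1 /\
     derive1 (derive1 (Ffun (Rr j) (pp j) (a i) (k i))) t < 0)
  (Homega : forall i j, 0 < omega i j < 1 /\
     Ffun (Rr j) (pp j) (a i) (k i) (omega i j) = 0 /\
     forall t, 0 < t < 1 -> Ffun (Rr j) (pp j) (a i) (k i) t = 0 -> t = omega i j)
  (x : 'I_n -> 'I_m -> R)
  (HGNE : isGNE Rr pp a k omega x)
  (i : 'I_n) (HI : TypeI Rr pp a k omega x i) :
  forall j, inJ omega x i j = inA omega x i j.
Proof.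
move=> j; rewrite /inJ; case Aj: (inA omega x i j) => //=.
have [x0|//] := eqVneq (x i j) 0; exfalso.
have [HCi [HTi Hopt]] := HGNE i.
set F := Ffun (Rr j) (pp j) (a i) (k i).
set s := xminus x i j.
have s0 : 0 <= s.
  by apply: sumr_ge0 => l _; have [[/(_ j) /andP[] ]] := HGNE l.
set S := \sum_(j0 < m | inJ omega x i j0) x i j0.
have HS : S < 1 by case: HI.
have S0 : 0 <= S by apply: sumr_ge0 => l _; case: HCi => /(_ l) /andP[].
have Hsum : \sum_(j0 < m) x i j0 = S.
  rewrite (bigID (inJ omega x i)) /= [X in _ + X]big1 ?addr0 // => l.
  rewrite /inJ negb_and => /orP[nA|/negPn/eqP //].
  by have [_ /(_ nA)] := HTi.2 l.
have Aj' : s < omega i j by [].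
set eps := Num.min (omega i j - s) (1 - S) / 2.
have mpos : 0 < Num.min (omega i j - s) (1 - S).
  by rewrite lt_min !subr_gt0 Aj' HS.
have eps0 : 0 < eps by rewrite divr_gt0.
have epsle : eps <= Num.min (omega i j - s) (1 - S).
  by rewrite /eps; move: mpos; set q := Num.min _ _ => q0; lra.
have epsw : eps < omega i j - s.
  have : Num.min (omega i j - s) (1 - S) <= omega i j - s by rewrite ge_min lexx. rewrite /eps; move: mpos.
  set q := Num.min _ _; set w := omega i j - s => q0 qw; lra.
have eps1 : eps <= 1 - S by apply: (le_trans epsle); rewrite ge_min lexx orbT.
set y := fun j' => if j' == j then eps else x i j'.
have rest : \sum_(j' < m | j' != j) y j' = \sum_(j' < m | j' != j) x i j'.
  by apply: eq_bigr => l /negbTE; rewrite /y => ->.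
have Ty : inTheta omega x i y.
  split; [split|].
  - move=> l; rewrite /y; case: eqP => _; last by case: HCi => /(_ l).
    rewrite (ltW eps0) /= (le_trans eps1) // lerBlDr lerDl //.
  - rewrite (bigD1 j) //= rest /y eqxx.
    move: Hsum; rewrite (bigD1 j) //= x0 add0r => ->.
    by rewrite -lerBrDr.
  - move=> l; rewrite /y; case: eqP => [->|_]; last exact: HTi.2 l.
    by rewrite Aj; split => // _; rewrite (ltW eps0) (ltW epsw).
have := Hopt y Ty; apply/negP; rewrite -ltNge.
rewrite /util (bigD1 j) //= [X in _ < X](bigD1 j) //=.
have -> : \sum_(j' < m | j' != j) y j' `^ a i *
    Ffun (Rr j') (pp j') (a i) (k i) (y j' + xminus x i j') =
  \sum_(j' < m | j' != j) x i j' `^ a i *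
    Ffun (Rr j') (pp j') (a i) (k i) (x i j' + xminus x i j').
  by apply: eq_bigr => l /negbTE; rewrite /y => ->.
rewrite ltrD2r x0 powR0 ?mul0r; last by have /andP[/gt_eqF -> _] := Ha i.
rewrite /y eqxx mulr_gt0 // ?powR_gt0 //.
have [Hw [_ Huq]] := Homega i j.
apply: (@Fpos R _ (omega i j) (eps + s) (HFc i j) _ Hw Huq).
- rewrite /F /Ffun Hp0 subr0 mulr1 mulr0 subr0 powR_gt0 // subr_gt0 //.
- by rewrite addr_ge0 // ltW.
- by rewrite -ltrBrDr.
Qed.
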